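(* The graph $T_7$ is a minimal non-word-representable graph: $T_7$ is not word-representable, but every graph obtained from $T_7$ by deleting one vertex is word-representable.
   Context: A graph $G=(V,E)$ is word-representable if there exists a word $w$ over the alphabet $V$ such that for all distinct $x,y\in V$, the letters $x$ and $y$ alternate in $w$ if and only if $xy\in E$ (alternation meaning that deleting all letters other than $x$ and $y$ leaves $xyxy\cdots$ or $yxyx\cdots$). The graph $T_7$ has vertex set $\{1,\dots,9\}$; the vertices $1,2,3,4,5$ form a clique, the vertices $6,7,8,9$ form an independent set, and the remaining edges are: $6$ is adjacent to $1,3$; $7$ is adjacent to $2,4$; $8$ is adjacent to $1,2,5$; $9$ is adjacent to $3,4,5$. *)

(* Defs.v *)
From mathcomp Require Import all_boot.
Set Implicit Arguments. Unset Strict Implicit. Unset Printing Implicit Defensive.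

Definition alt_word (T : Type) (x y : T) (n : nat) : seq T :=
  mkseq (fun i => if odd i then y else x) n.

Definition alternate (T : eqType) (w : seq T) (x y : T) : bool :=
  let s := [seq z <- w | (z == x) || (z == y)] in
  (s == alt_word x y (size s)) || (s == alt_word y x (size s)).

Definition word_representable_on (T : finType) (e : rel T) (S : {set T}) : Prop :=
  exists w : seq T,
    [/\ all (fun z => z \in S) w,
        {subset S <= w} &
        forall x y, x \in S -> y \in S -> x != y ->
          (alternate w x y <-> e x y)].

Definition word_representable (T : finType) (e : rel T) : Prop :=
  word_representable_on e [set: T].

(* The graph T_7.  Vertex k of the paper (1 <= k <= 9) is the ordinal
   k-1 : 'I_9.  Edges are listed with the paper's labels. *)
Definition T7_edges : seq (nat * nat) :=
  [:: (1,2); (1,3); (1,4); (1,5); (2,3); (2,4); (2,5); (3,4); (3,5); (4,5);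
      (6,1); (6,3); (7,2); (7,4); (8,1); (8,2); (8,5); (9,3); (9,4); (9,5)].

Definition T7 : rel 'I_9 :=
  fun x y => ((x.+1, y.+1) \in T7_edges) || ((y.+1, x.+1) \in T7_edges).

(* Main.v *)
Require Import Defs.
From mathcomp Require Import all_boot.
From mathcomp Require Import zify.
Set Implicit Arguments. Unset Strict Implicit. Unset Printing Implicit Defensive.

Section Gen.
Variable T : eqType.

Definition cnt (w : seq T) (v : T) n := count_mem v (take n w).
Definition Q (w : seq T) x y := forall n, cnt w y n <= cnt w x n <= (cnt w y n).+1.

Lemma alt_wordS (x y : T) n : alt_word x y n.+1 = x :: alt_word y x n.
Proof.
rewrite /alt_word /mkseq /= (iotaDl 1 0) -map_comp.
congr (_ :: _); apply: eq_map => i /=; by case: (odd i).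
Qed.

Lemma filter_swap (w : seq T) x y :
  [seq z <- w | (z == x) || (z == y)] = [seq z <- w | (z == y) || (z == x)].
Proof. by apply: eq_filter => z; rewrite orbC. Qed.

Lemma Q_alt (w : seq T) x y : x != y -> Q w x y ->
  let s := [seq z <- w | (z == x) || (z == y)] in s = alt_word x y (size s).
Proof.
elim: w x y => [|z w IH] x y xy HQ //=.
case: eqP => [zx|zx] /=; first subst z.
  rewrite alt_wordS; congr (_ :: _).
  rewrite filter_swap; apply: (IH y x); first by rewrite eq_sym.
  move=> n; have := HQ n.+1; rewrite /cnt /= eqxx (negbTE xy) /= add0n add1n.
  case/andP=> h1 h2; apply/andP; lia.
case: eqP => [zy|zy] /=.
  have := HQ 1; rewrite /cnt /= take0 zy eqxx eq_sym (negbTE xy) /=.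
  done.
apply: IH => // n; have := HQ n.+1; rewrite /cnt /=.
by move/eqP: zx; move/eqP: zy; rewrite !(eq_sym z) => /negbTE -> /negbTE ->.
Qed.

Lemma alt_Q (w : seq T) x y : x != y ->
  [seq z <- w | (z == x) || (z == y)] = alt_word x y (size [seq z <- w | (z == x) || (z == y)]) ->
  Q w x y.
Proof.
elim: w x y => [|z w IH] x y xy /=.
  by move=> _ n; rewrite /cnt.
case: eqP => [zx|zx] /=; first subst z.
  rewrite alt_wordS => -[]; rewrite filter_swap => /(IH y x).
  rewrite eq_sym => /(_ xy) H [|n]; first by rewrite /cnt.
  have := H n; rewrite /cnt /= eqxx (negbTE xy) /= add0n add1n.
  case/andP=> h1 h2; apply/andP; lia.
case: eqP => [zy|zy] /=.
  by rewrite alt_wordS => -[] zx'; rewrite zx' in zy; case: zx.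
move=> /(IH x y xy) H [|n]; first by rewrite /cnt.
have := H n; rewrite /cnt /=.
by move/eqP: zx; move/eqP: zy; rewrite !(eq_sym z) => /negbTE -> /negbTE ->.
Qed.

Lemma alternate_Q (w : seq T) x y : x != y -> alternate w x y -> Q w x y \/ Q w y x.
Proof.
move=> xy; case/orP=> /eqP H; [left; exact: alt_Q|right].
apply: alt_Q; first by rewrite eq_sym.
by rewrite -filter_swap.
Qed.

Lemma Q_alternate (w : seq T) x y : x != y -> Q w x y -> alternate w x y.
Proof. by move=> xy /(Q_alt xy) /= H; rewrite /alternate /= -H eqxx. Qed.

End Gen.


Definition T7n (a b : nat) : bool :=
  ((a.+1, b.+1) \in T7_edges) || ((b.+1, a.+1) \in T7_edges).

Lemma alternate_map (T1 T2 : eqType) (f : T1 -> T2) (w : seq T1) x y :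
  injective f -> alternate (map f w) (f x) (f y) = alternate w x y.
Proof.
move=> fi; rewrite /alternate /= filter_map size_map.
rewrite (@eq_filter _ _ (fun z => (z == x) || (z == y))); last first.
  by move=> z /=; rewrite !(inj_eq fi).
have AM : forall a b n, map f (alt_word a b n) = alt_word (f a) (f b) n.
  by move=> a b n; rewrite /alt_word /mkseq -map_comp; apply: eq_map => i /=; case: (odd i).
by rewrite -!AM !(inj_eq (inj_map fi)).
Qed.

Lemma Q_index (T : eqType) (w : seq T) x y : x != y -> x \in w ->
  index x w < index y w -> alternate w x y -> Q w x y.
Proof.
move=> xy xw ixy /(alternate_Q xy) [//|H].
have := H (index x w).+1; rewrite /cnt.
have -> : count_mem y (take (index x w).+1 w) = 0.
  apply/count_memPn; case yw: (y \in w); last by apply: contraFN yw; apply: mem_take.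
  by rewrite in_take // ltnS leqNgt ixy.
have : x \in take (index x w).+1 w by rewrite in_take.
rewrite -has_pred1 has_count => hc /andP[h _]; lia.
Qed.

Definition pat_ok (rk : nat -> nat) (pt : seq nat * nat * nat) : bool :=
  let: (p, i, j) := pt in
  match p with
  | [::] => false
  | v0 :: rest =>
    [&& all (fun v => v < 9) p,
        path (fun a b => T7n a b && (rk a < rk b)) v0 rest,
        T7n v0 (last v0 rest), rk v0 < rk (last v0 rest),
        i < j, j < size p, nth 0 p i != nth 0 p j &
        ~~ T7n (nth 0 p i) (nth 0 p j)]
  end.

Section Shortcut.
Variable wn : seq nat.
Hypothesis HW : forall a b, a < 9 -> b < 9 -> a != b -> (alternate wn a b <-> T7n a b).
Variable rk : nat -> nat.
Hypothesis Hrk : forall a b, T7n a b -> rk a < rk b -> Q wn a b.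

Lemma no_pat pt : ~~ pat_ok rk pt.
Proof.
case: pt => [[p i] j]; case: p => [|v0 rest] //=.
apply/negP => /and5P[Hall Hpath Hsh Hrksh /and4P[ij js nij nT]].
have Qsh := Hrk Hsh Hrksh.
have {}Hall : all (fun v => v < 9) (v0 :: rest) := Hall.
set p := v0 :: rest in Hall js nij nT.
have Hle : forall n, {in gtn (size p) &, {homo nth 0 p : k l / k < l >-> cnt wn l n <= cnt wn k n}}.
  move=> n; apply/pairwiseP; rewrite -sorted_pairwise; last first.
    by move=> a b c /= h1 h2; apply: leq_trans h2 h1.
  rewrite /p /=; apply: sub_path Hpath => a b /andP[e r].
  by case/andP: (Hrk e r n).
have Hle' : forall n k l, k <= l < size p -> cnt wn (nth 0 p l) n <= cnt wn (nth 0 p k) n.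
  move=> n k l /andP[]; rewrite leq_eqVlt => /orP[/eqP -> //|kl ls].
  by apply: (Hle n) => //; rewrite inE /=; apply: ltn_trans ls.
have : T7n (nth 0 p i) (nth 0 p j).
  have Hi : nth 0 p i < 9 by apply: (allP Hall); apply: mem_nth; apply: ltn_trans js.
  have Hj : nth 0 p j < 9 by apply: (allP Hall); apply: mem_nth.
  apply/(HW Hi Hj nij)/Q_alternate => // n.
  have h0 : cnt wn (nth 0 p j) n <= cnt wn (nth 0 p i) n by apply: Hle'; rewrite ltnW.
  have h1 : cnt wn (nth 0 p i) n <= cnt wn v0 n.
    by apply: (Hle' n 0 i); rewrite leq0n /= (ltn_trans ij js).
  have h2 : cnt wn (last v0 rest) n <= cnt wn (nth 0 p j) n.
    have -> : last v0 rest = nth 0 p (size rest).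
      by rewrite /p -[size rest]/((size (v0::rest)).-1) nth_last.
    apply: (Hle' n j (size rest)).
    by rewrite /= -ltnS js /=.
  case/andP: (Qsh n) => _ h3.
  rewrite h0 /=; apply: (leq_trans h1); apply: (leq_trans h3); by rewrite ltnS.
by rewrite (negbTE nT).
Qed.
End Shortcut.

Fixpoint ca (n : nat) (f : seq nat -> bool) (rest : seq nat) : bool :=
  match n with
  | 0 => f [::]
  | n'.+1 => all (fun x => ca n' (fun t => f (x :: t)) (rem x rest)) rest
  end.

Lemma caP n f rest : size rest = n -> ca n f rest -> forall q, perm_eq q rest -> f q.
Proof.
elim: n f rest => [|n IH] f rest /= Hs.
  move=> Hf q /perm_size; rewrite Hs; by case: q.
move=> /allP Hall [|x q] Hq; first by move/perm_size: Hq; rewrite Hs.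
have xr : x \in rest by rewrite -(perm_mem Hq) mem_head.
apply: (IH (fun t => f (x :: t)) (rem x rest) _ (Hall x xr) q).
  by rewrite size_rem // Hs.
by rewrite -(perm_cons x) (perm_trans Hq) // perm_to_rem.
Qed.

Definition pat_valid (pt : seq nat * nat * nat) : bool :=
  let: (p, i, j) := pt in
  match p with
  | [::] => false
  | v0 :: rest =>
    [&& all (fun v => v < 9) p,
        path T7n v0 rest,
        T7n v0 (last v0 rest),
        i < j, j < size p, nth 0 p i != nth 0 p j &
        ~~ T7n (nth 0 p i) (nth 0 p j)]
  end.

Definition rank_ok (rk : nat -> nat) (p : seq nat) : bool :=
  (rk (head 0 p) < rk (last 0 p)) && sorted (fun a b => rk a < rk b) p.

Lemma pat_okI rk pt : pat_valid pt -> rank_ok rk pt.1.1 -> pat_ok rk pt.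
Proof.
case: pt => [[[|v0 rest] i] j] //= /and5P[H1 H2 H3 H4 /and3P[H5 H6 H7]] /andP[R1 R2].
by rewrite H1 H3 R1 H4 H5 H6 H7 path_relI H2 /= andbT; exact: R2.
Qed.

Definition good (q : seq nat) := exists2 pt, pat_valid pt & rank_ok (fun a => index a q) pt.1.1.

Fixpoint myall (f : nat -> bool) (s : seq nat) : bool :=
  match s with [::] => true | x :: s' => if f x then myall f s' else false end.
Lemma myallE f s : myall f s = all f s.
Proof. by elim: s => //= x s ->; case: (f x). Qed.

Fixpoint posn (a : nat) (s : seq nat) : nat :=
  match s with [::] => 0 | y :: s' => if eqn a y then 0 else (posn a s').+1 end.
Lemma posnE a s : posn a s = index a s.
Proof. by elim: s => //= y s ->; rewrite eq_sym. Qed.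

Fixpoint myhas (f : seq nat * nat * nat -> bool) (s : seq (seq nat * nat * nat)) : bool :=
  match s with [::] => false | x :: s' => if f x then true else myhas f s' end.
Lemma myhasE f s : myhas f s = has f s.
Proof. by elim: s => //= x s ->; case: (f x). Qed.

Fixpoint fsorted (pre : seq nat) (a : nat) (p : seq nat) : bool :=
  match p with [::] => true | b :: p' => if posn a pre < posn b pre then fsorted pre b p' else false end.

Definition fchk (pre : seq nat) (p : seq nat) : bool :=
  if myall (fun v => posn v pre < size pre) p then
    match p with [::] => false | a :: p' =>
      if posn a pre < posn (last a p') pre then fsorted pre a p' else false end
  else false.

Lemma fchkE pre p : fchk pre p -> all (fun v => v \in pre) p && rank_ok (fun a => index a pre) p.
Proof.
rewrite /fchk myallE; case: ifP => // /allP H.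
have -> : all (fun v => v \in pre) p by apply/allP => v /H; rewrite posnE index_mem.
case: p H => [|a p'] //= H; rewrite !posnE; case: ifP => // h; rewrite /rank_ok /= h /=.
elim: p' a {H h} => //= b p' IH a; rewrite !posnE; case: ifP => // h /= H; exact: IH.
Qed.

Fixpoint ca2 (L : seq (seq (seq nat * nat * nat))) (n : nat) (pre rest : seq nat) : bool :=
  match n with
  | 0 => false
  | n'.+1 => myall (fun x => let pre' := rcons pre x in
       if myhas (fun pt => fchk pre' pt.1.1) (nth [::] L x) then true else ca2 L n' pre' (rem x rest)) rest
  end.

Lemma rank_ok_cat (s t p : seq nat) : all (fun v => v \in s) p ->
  rank_ok (fun a => index a s) p -> rank_ok (fun a => index a (s ++ t)) p.
Proof.
move=> Hp; have E : {in p, (fun a => index a (s ++ t)) =1 (fun a => index a s)}.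
  by move=> a /(allP Hp) ins; rewrite index_cat ins.
case: p Hp E => [|v0 rest] Hp E; first by rewrite /rank_ok /= ltnn.
rewrite /rank_ok /= !E ?mem_head ?mem_last //.
rewrite (@eq_in_path _ (mem (v0 :: rest)) (fun a b => index a (s ++ t) < index b (s ++ t)) (fun a b => index a s < index b s)) //.
by move=> a b ha hb /=; rewrite !E.
by apply/allP.
Qed.

Lemma ca2P L : all (all pat_valid) L -> forall n pre rest, size rest = n -> ca2 L n pre rest ->
  forall q, perm_eq q rest -> good (pre ++ q).
Proof.
move=> HL; elim=> [|n IH] pre rest //= Hs; rewrite myallE => /allP Hall [|x q] Hq.
  by move/perm_size: Hq; rewrite Hs.
have xr : x \in rest by rewrite -(perm_mem Hq) mem_head.
have Hq' : perm_eq q (rem x rest).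
  by rewrite -(perm_cons x) (perm_trans Hq) // perm_to_rem.
move: (Hall x xr); rewrite myhasE; case: ifP => [/hasP[pt ptin /fchkE/andP[h1 h2]] _|_ H].
  exists pt.
    case: (ltnP x (size L)) => xl; last by rewrite nth_default in ptin.
    by apply: (allP (allP HL _ (mem_nth [::] xl))).
  by rewrite -cat_rcons; apply: rank_ok_cat.
rewrite -cat_rcons; apply: (IH _ (rem x rest)) => //.
by rewrite size_rem // Hs.
Qed.


Definition fchk3 (s : seq nat) (p : seq nat) : bool :=
  match p with
  | [:: a; b; c; d] =>
    if posn a s < posn b s then
      if posn b s < posn c s then
        if posn c s < size s then eqn (posn d s) (size s) else false
      else false
    else false
  | _ => false
  end.

Lemma fchk3E s p : fchk3 s p -> exists a b c d, [/\ p = [:: a; b; c; d],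
  index a s < index b s, index b s < index c s, index c s < size s & d \notin s].
Proof.
case: p => [|a [|b [|c [|d [|]]]]] //=; rewrite !posnE.
case: ifP => // h1; case: ifP => // h2; case: ifP => // h3 /eqnP h4.
exists a, b, c, d; split => //.
by rewrite -index_mem h4 ltnn.
Qed.

Lemma rank_ok_cat3 (s t : seq nat) a b c d :
  index a s < index b s -> index b s < index c s -> index c s < size s -> d \notin s ->
  rank_ok (fun v => index v (s ++ t)) [:: a; b; c; d].
Proof.
move=> h1 h2 h3 h4.
have ic : c \in s by rewrite -index_mem.
have ib : b \in s by rewrite -index_mem (ltn_trans h2).
have ia : a \in s by rewrite -index_mem (ltn_trans h1) // (ltn_trans h2).
rewrite /rank_ok /= !index_cat ia ib ic (negbTE h4) h1 h2 /= !andbT.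
have -> : index c s < size s + index d t by rewrite (leq_trans h3) ?leq_addr.
by rewrite andbT (leq_trans (ltn_trans h1 (ltn_trans h2 h3))) ?leq_addr.
Qed.

Lemma mem_rem_neq (x v : nat) s : v != x -> v \in s -> v \in rem x s.
Proof.
move=> vx; elim: s => //= y s IH; rewrite inE => /orP[/eqP E|vs].
  by subst v; rewrite (negbTE vx) mem_head.
by case: (y == x) => //; rewrite inE (IH vs) orbT.
Qed.

Fixpoint ca3 (L : seq (seq (seq nat * nat * nat))) (n : nat) (pre rest : seq nat) : bool :=
  match n with
  | 0 => false
  | n'.+1 => myall (fun x => let pre' := rcons pre x in
       if myhas (fun pt => fchk3 pre' pt.1.1) (nth [::] L x) then true else ca3 L n' pre' (rem x rest)) rest
  end.

Lemma ca3P L : all (all pat_valid) L -> forall n pre rest, size rest = n ->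
  (forall v, v < 9 -> v \in pre ++ rest) -> ca3 L n pre rest ->
  forall q, perm_eq q rest -> good (pre ++ q).
Proof.
move=> HL; elim=> [|n IH] pre rest //= Hs H9; rewrite myallE => /allP Hall [|x q] Hq.
  by move/perm_size: Hq; rewrite Hs.
have xr : x \in rest by rewrite -(perm_mem Hq) mem_head.
have Hq' : perm_eq q (rem x rest).
  by rewrite -(perm_cons x) (perm_trans Hq) // perm_to_rem.
move: (Hall x xr); rewrite myhasE; case: ifP => [/hasP[pt ptin Hf] _|_ H].
  have pv : pat_valid pt.
    case: (ltnP x (size L)) => xl; last by rewrite nth_default in ptin.
    by apply: (allP (allP HL _ (mem_nth [::] xl))).
  exists pt => //.
  case/fchk3E: Hf => a [b [c [d [Ep h1 h2 h3 h4]]]].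
  rewrite -cat_rcons Ep; apply: rank_ok_cat3 => //.
rewrite -cat_rcons; apply: (IH _ (rem x rest)) => //.
  by rewrite size_rem // Hs.
move=> v /H9; rewrite mem_cat => /orP[vp|vr]; rewrite mem_cat mem_rcons inE ?vp ?orbT //.
case: (eqVneq v x) => [//|vx] /=.
by rewrite (mem_rem_neq vx vr) orbT.
Qed.

Definition patsL3 : seq (seq (seq nat * nat * nat)) := [::
  [:: ([:: 1; 2; 0; 7], 1, 3); ([:: 1; 3; 0; 7], 1, 3); ([:: 1; 7; 0; 2], 1, 3); ([:: 1; 7; 0; 3], 1, 3); ([:: 2; 1; 0; 5], 1, 3); ([:: 2; 3; 0; 5], 1, 3); ([:: 2; 4; 0; 5], 1, 3); ([:: 2; 5; 0; 1], 1, 3); ([:: 2; 5; 0; 3], 1, 3); ([:: 2; 5; 0; 4], 1, 3); ([:: 4; 2; 0; 7], 1, 3); ([:: 4; 3; 0; 7], 1, 3); ([:: 4; 7; 0; 2], 1, 3); ([:: 4; 7; 0; 3], 1, 3); ([:: 6; 1; 0; 3], 0, 2); ([:: 6; 3; 0; 1], 0, 2); ([:: 8; 2; 0; 3], 0, 2); ([:: 8; 2; 0; 4], 0, 2); ([:: 8; 3; 0; 2], 0, 2); ([:: 8; 3; 0; 4], 0, 2); ([:: 8; 4; 0; 2], 0, 2); ([:: 8; 4; 0; 3], 0, 2)];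
  [:: ([:: 0; 2; 1; 7], 1, 3); ([:: 0; 3; 1; 7], 1, 3); ([:: 0; 7; 1; 2], 1, 3); ([:: 0; 7; 1; 3], 1, 3); ([:: 3; 0; 1; 6], 1, 3); ([:: 3; 2; 1; 6], 1, 3); ([:: 3; 4; 1; 6], 1, 3); ([:: 3; 6; 1; 0], 1, 3); ([:: 3; 6; 1; 2], 1, 3); ([:: 3; 6; 1; 4], 1, 3); ([:: 4; 2; 1; 7], 1, 3); ([:: 4; 3; 1; 7], 1, 3); ([:: 4; 7; 1; 2], 1, 3); ([:: 4; 7; 1; 3], 1, 3); ([:: 5; 0; 1; 2], 0, 2); ([:: 5; 2; 1; 0], 0, 2); ([:: 8; 2; 1; 3], 0, 2); ([:: 8; 2; 1; 4], 0, 2); ([:: 8; 3; 1; 2], 0, 2); ([:: 8; 3; 1; 4], 0, 2); ([:: 8; 4; 1; 2], 0, 2); ([:: 8; 4; 1; 3], 0, 2)];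
  [:: ([:: 0; 1; 2; 5], 1, 3); ([:: 0; 3; 2; 5], 1, 3); ([:: 0; 4; 2; 5], 1, 3); ([:: 0; 5; 2; 1], 1, 3); ([:: 0; 5; 2; 3], 1, 3); ([:: 0; 5; 2; 4], 1, 3); ([:: 3; 0; 2; 8], 1, 3); ([:: 3; 1; 2; 8], 1, 3); ([:: 3; 8; 2; 0], 1, 3); ([:: 3; 8; 2; 1], 1, 3); ([:: 4; 0; 2; 8], 1, 3); ([:: 4; 1; 2; 8], 1, 3); ([:: 4; 8; 2; 0], 1, 3); ([:: 4; 8; 2; 1], 1, 3); ([:: 6; 1; 2; 3], 0, 2); ([:: 6; 3; 2; 1], 0, 2); ([:: 7; 0; 2; 1], 0, 2); ([:: 7; 0; 2; 4], 0, 2); ([:: 7; 1; 2; 0], 0, 2); ([:: 7; 1; 2; 4], 0, 2); ([:: 7; 4; 2; 0], 0, 2); ([:: 7; 4; 2; 1], 0, 2)];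
  [:: ([:: 1; 0; 3; 6], 1, 3); ([:: 1; 2; 3; 6], 1, 3); ([:: 1; 4; 3; 6], 1, 3); ([:: 1; 6; 3; 0], 1, 3); ([:: 1; 6; 3; 2], 1, 3); ([:: 1; 6; 3; 4], 1, 3); ([:: 2; 0; 3; 8], 1, 3); ([:: 2; 1; 3; 8], 1, 3); ([:: 2; 8; 3; 0], 1, 3); ([:: 2; 8; 3; 1], 1, 3); ([:: 4; 0; 3; 8], 1, 3); ([:: 4; 1; 3; 8], 1, 3); ([:: 4; 8; 3; 0], 1, 3); ([:: 4; 8; 3; 1], 1, 3); ([:: 5; 0; 3; 2], 0, 2); ([:: 5; 2; 3; 0], 0, 2); ([:: 7; 0; 3; 1], 0, 2); ([:: 7; 0; 3; 4], 0, 2); ([:: 7; 1; 3; 0], 0, 2); ([:: 7; 1; 3; 4], 0, 2); ([:: 7; 4; 3; 0], 0, 2); ([:: 7; 4; 3; 1], 0, 2)];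
  [:: ([:: 0; 2; 4; 7], 1, 3); ([:: 0; 3; 4; 7], 1, 3); ([:: 0; 7; 4; 2], 1, 3); ([:: 0; 7; 4; 3], 1, 3); ([:: 1; 2; 4; 7], 1, 3); ([:: 1; 3; 4; 7], 1, 3); ([:: 1; 7; 4; 2], 1, 3); ([:: 1; 7; 4; 3], 1, 3); ([:: 2; 0; 4; 8], 1, 3); ([:: 2; 1; 4; 8], 1, 3); ([:: 2; 8; 4; 0], 1, 3); ([:: 2; 8; 4; 1], 1, 3); ([:: 3; 0; 4; 8], 1, 3); ([:: 3; 1; 4; 8], 1, 3); ([:: 3; 8; 4; 0], 1, 3); ([:: 3; 8; 4; 1], 1, 3); ([:: 5; 0; 4; 2], 0, 2); ([:: 5; 2; 4; 0], 0, 2); ([:: 6; 1; 4; 3], 0, 2); ([:: 6; 3; 4; 1], 0, 2)];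
  [:: ([:: 1; 0; 5; 2], 0, 2); ([:: 1; 2; 5; 0], 0, 2); ([:: 3; 0; 5; 2], 0, 2); ([:: 3; 2; 5; 0], 0, 2); ([:: 4; 0; 5; 2], 0, 2); ([:: 4; 2; 5; 0], 0, 2)];
  [:: ([:: 0; 1; 6; 3], 0, 2); ([:: 0; 3; 6; 1], 0, 2); ([:: 2; 1; 6; 3], 0, 2); ([:: 2; 3; 6; 1], 0, 2); ([:: 4; 1; 6; 3], 0, 2); ([:: 4; 3; 6; 1], 0, 2)];
  [:: ([:: 2; 0; 7; 1], 0, 2); ([:: 2; 0; 7; 4], 0, 2); ([:: 2; 1; 7; 0], 0, 2); ([:: 2; 1; 7; 4], 0, 2); ([:: 2; 4; 7; 0], 0, 2); ([:: 2; 4; 7; 1], 0, 2); ([:: 3; 0; 7; 1], 0, 2); ([:: 3; 0; 7; 4], 0, 2); ([:: 3; 1; 7; 0], 0, 2); ([:: 3; 1; 7; 4], 0, 2); ([:: 3; 4; 7; 0], 0, 2); ([:: 3; 4; 7; 1], 0, 2)];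
  [:: ([:: 0; 2; 8; 3], 0, 2); ([:: 0; 2; 8; 4], 0, 2); ([:: 0; 3; 8; 2], 0, 2); ([:: 0; 3; 8; 4], 0, 2); ([:: 0; 4; 8; 2], 0, 2); ([:: 0; 4; 8; 3], 0, 2); ([:: 1; 2; 8; 3], 0, 2); ([:: 1; 2; 8; 4], 0, 2); ([:: 1; 3; 8; 2], 0, 2); ([:: 1; 3; 8; 4], 0, 2); ([:: 1; 4; 8; 2], 0, 2); ([:: 1; 4; 8; 3], 0, 2)]].

Definition patsL : seq (seq (seq nat * nat * nat)) := [::
  [:: ([:: 1; 2; 5; 0], 0, 2); ([:: 1; 6; 3; 0], 1, 3); ([:: 2; 1; 7; 0], 0, 2); ([:: 2; 4; 7; 0], 0, 2); ([:: 2; 8; 3; 0], 1, 3); ([:: 2; 8; 4; 0], 1, 3); ([:: 3; 1; 7; 0], 0, 2); ([:: 3; 2; 5; 0], 0, 2); ([:: 3; 4; 7; 0], 0, 2); ([:: 3; 6; 1; 0], 1, 3); ([:: 3; 8; 2; 0], 1, 3); ([:: 3; 8; 4; 0], 1, 3); ([:: 4; 2; 5; 0], 0, 2); ([:: 4; 8; 2; 0], 1, 3); ([:: 4; 8; 3; 0], 1, 3); ([:: 5; 2; 1; 0], 0, 2); ([:: 5; 2; 3; 0], 0, 2); ([:: 5; 2; 4; 0], 0, 2); ([:: 7; 1; 2; 0], 0, 2); ([:: 7; 1; 3; 0], 0, 2); ([:: 7; 4; 2; 0], 0, 2); ([:: 7; 4; 3; 0], 0, 2)];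
  [:: ([:: 0; 3; 6; 1], 0, 2); ([:: 0; 5; 2; 1], 1, 3); ([:: 2; 0; 7; 1], 0, 2); ([:: 2; 3; 6; 1], 0, 2); ([:: 2; 4; 7; 1], 0, 2); ([:: 2; 5; 0; 1], 1, 3); ([:: 2; 8; 3; 1], 1, 3); ([:: 2; 8; 4; 1], 1, 3); ([:: 3; 0; 7; 1], 0, 2); ([:: 3; 4; 7; 1], 0, 2); ([:: 3; 8; 2; 1], 1, 3); ([:: 3; 8; 4; 1], 1, 3); ([:: 4; 3; 6; 1], 0, 2); ([:: 4; 8; 2; 1], 1, 3); ([:: 4; 8; 3; 1], 1, 3); ([:: 6; 3; 0; 1], 0, 2); ([:: 6; 3; 2; 1], 0, 2); ([:: 6; 3; 4; 1], 0, 2); ([:: 7; 0; 2; 1], 0, 2); ([:: 7; 0; 3; 1], 0, 2); ([:: 7; 4; 2; 1], 0, 2); ([:: 7; 4; 3; 1], 0, 2)];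
  [:: ([:: 0; 3; 8; 2], 0, 2); ([:: 0; 4; 8; 2], 0, 2); ([:: 0; 7; 1; 2], 1, 3); ([:: 0; 7; 4; 2], 1, 3); ([:: 1; 0; 5; 2], 0, 2); ([:: 1; 3; 8; 2], 0, 2); ([:: 1; 4; 8; 2], 0, 2); ([:: 1; 6; 3; 2], 1, 3); ([:: 1; 7; 0; 2], 1, 3); ([:: 1; 7; 4; 2], 1, 3); ([:: 3; 0; 5; 2], 0, 2); ([:: 3; 6; 1; 2], 1, 3); ([:: 4; 0; 5; 2], 0, 2); ([:: 4; 7; 0; 2], 1, 3); ([:: 4; 7; 1; 2], 1, 3); ([:: 5; 0; 1; 2], 0, 2); ([:: 5; 0; 3; 2], 0, 2); ([:: 5; 0; 4; 2], 0, 2); ([:: 8; 3; 0; 2], 0, 2); ([:: 8; 3; 1; 2], 0, 2); ([:: 8; 4; 0; 2], 0, 2); ([:: 8; 4; 1; 2], 0, 2)];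
  [:: ([:: 0; 1; 6; 3], 0, 2); ([:: 0; 2; 8; 3], 0, 2); ([:: 0; 4; 8; 3], 0, 2); ([:: 0; 5; 2; 3], 1, 3); ([:: 0; 7; 1; 3], 1, 3); ([:: 0; 7; 4; 3], 1, 3); ([:: 1; 2; 8; 3], 0, 2); ([:: 1; 4; 8; 3], 0, 2); ([:: 1; 7; 0; 3], 1, 3); ([:: 1; 7; 4; 3], 1, 3); ([:: 2; 1; 6; 3], 0, 2); ([:: 2; 5; 0; 3], 1, 3); ([:: 4; 1; 6; 3], 0, 2); ([:: 4; 7; 0; 3], 1, 3); ([:: 4; 7; 1; 3], 1, 3); ([:: 6; 1; 0; 3], 0, 2); ([:: 6; 1; 2; 3], 0, 2); ([:: 6; 1; 4; 3], 0, 2); ([:: 8; 2; 0; 3], 0, 2); ([:: 8; 2; 1; 3], 0, 2); ([:: 8; 4; 0; 3], 0, 2); ([:: 8; 4; 1; 3], 0, 2)];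
  [:: ([:: 0; 2; 8; 4], 0, 2); ([:: 0; 3; 8; 4], 0, 2); ([:: 0; 5; 2; 4], 1, 3); ([:: 1; 2; 8; 4], 0, 2); ([:: 1; 3; 8; 4], 0, 2); ([:: 1; 6; 3; 4], 1, 3); ([:: 2; 0; 7; 4], 0, 2); ([:: 2; 1; 7; 4], 0, 2); ([:: 2; 5; 0; 4], 1, 3); ([:: 3; 0; 7; 4], 0, 2); ([:: 3; 1; 7; 4], 0, 2); ([:: 3; 6; 1; 4], 1, 3); ([:: 7; 0; 2; 4], 0, 2); ([:: 7; 0; 3; 4], 0, 2); ([:: 7; 1; 2; 4], 0, 2); ([:: 7; 1; 3; 4], 0, 2); ([:: 8; 2; 0; 4], 0, 2); ([:: 8; 2; 1; 4], 0, 2); ([:: 8; 3; 0; 4], 0, 2); ([:: 8; 3; 1; 4], 0, 2)];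
  [:: ([:: 0; 1; 2; 5], 1, 3); ([:: 0; 3; 2; 5], 1, 3); ([:: 0; 4; 2; 5], 1, 3); ([:: 2; 1; 0; 5], 1, 3); ([:: 2; 3; 0; 5], 1, 3); ([:: 2; 4; 0; 5], 1, 3)];
  [:: ([:: 1; 0; 3; 6], 1, 3); ([:: 1; 2; 3; 6], 1, 3); ([:: 1; 4; 3; 6], 1, 3); ([:: 3; 0; 1; 6], 1, 3); ([:: 3; 2; 1; 6], 1, 3); ([:: 3; 4; 1; 6], 1, 3)];
  [:: ([:: 0; 2; 1; 7], 1, 3); ([:: 0; 2; 4; 7], 1, 3); ([:: 0; 3; 1; 7], 1, 3); ([:: 0; 3; 4; 7], 1, 3); ([:: 1; 2; 0; 7], 1, 3); ([:: 1; 2; 4; 7], 1, 3); ([:: 1; 3; 0; 7], 1, 3); ([:: 1; 3; 4; 7], 1, 3); ([:: 4; 2; 0; 7], 1, 3); ([:: 4; 2; 1; 7], 1, 3); ([:: 4; 3; 0; 7], 1, 3); ([:: 4; 3; 1; 7], 1, 3)];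
  [:: ([:: 2; 0; 3; 8], 1, 3); ([:: 2; 0; 4; 8], 1, 3); ([:: 2; 1; 3; 8], 1, 3); ([:: 2; 1; 4; 8], 1, 3); ([:: 3; 0; 2; 8], 1, 3); ([:: 3; 0; 4; 8], 1, 3); ([:: 3; 1; 2; 8], 1, 3); ([:: 3; 1; 4; 8], 1, 3); ([:: 4; 0; 2; 8], 1, 3); ([:: 4; 0; 3; 8], 1, 3); ([:: 4; 1; 2; 8], 1, 3); ([:: 4; 1; 3; 8], 1, 3)]].
Lemma patsL_valid : all (all pat_valid) patsL.
Proof. vm_compute. reflexivity. Qed.
Lemma patsL3_valid : all (all pat_valid) patsL3.
Proof. vm_compute. reflexivity. Qed.
Lemma chk_all : ca3 patsL3 9 [::] (iota 0 9).
Proof. vm_compute. reflexivity. Qed.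


Lemma T7n_lt a b : T7n a b -> (a < 9) && (b < 9).
Proof.
have HE : all (fun e => (e.1 <= 9) && (e.2 <= 9)) T7_edges by [].
by rewrite /T7n => /orP[] /(allP HE) /= /andP[-> ->].
Qed.

Lemma not_wr : ~ word_representable T7.
Proof.
case=> w [_ Hsub Halt].
set wn := map val w.
have HW : forall a b, a < 9 -> b < 9 -> a != b -> (alternate wn a b <-> T7n a b).
  move=> a b ha hb ab.
  have -> : a = val (Ordinal ha) by [].
  have -> : b = val (Ordinal hb) by [].
  rewrite /wn alternate_map; last exact: val_inj.
  by apply: Halt; rewrite ?in_setT.
have Hmem : forall a, a < 9 -> a \in wn.
  move=> a ha; have -> : a = val (Ordinal ha) by [].
  by rewrite /wn mem_map; [apply: Hsub; rewrite in_setT | exact: val_inj].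
pose q := sort (fun a b => index a wn <= index b wn) (iota 0 9).
have qperm : perm_eq q (iota 0 9) by rewrite /q perm_sort.
have qsorted : sorted (fun a b => index a wn <= index b wn) q.
  by apply: sort_sorted => a b; exact: leq_total.
have Hrk : forall a b, T7n a b -> index a q < index b q -> Q wn a b.
  move=> a b e r; case/andP: (T7n_lt e) => ha hb.
  have ab : a != b by apply/eqP => E; rewrite E ltnn in r.
  have aq : a \in q by rewrite (perm_mem qperm) mem_iota.
  have bq : b \in q by rewrite (perm_mem qperm) mem_iota.
  have le : index a wn <= index b wn.
    apply: (sorted_ltn_index _ qsorted) => //.
    by move=> x y z /= h1 h2; apply: leq_trans h1 h2.
  have lt : index a wn < index b wn.
    rewrite ltn_neqAle le andbT; apply/eqP => E.
    move/eqP: ab; apply; exact: (index_inj 0 (Hmem a ha) (Hmem b hb) E).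
  apply: Q_index => //; first exact: Hmem.
  by apply/(HW a b ha hb ab).
have H9 : forall v, v < 9 -> v \in [::] ++ iota 0 9 by move=> v hv; rewrite cat0s mem_iota.
have := ca3P patsL3_valid (size_iota 0 9) H9 chk_all qperm.
case=> pt hv hr.
by move/negP: (no_pat HW Hrk pt); apply; apply: pat_okI.
Qed.

Definition goodn (v : nat) (wn : seq nat) : bool :=
  [&& all (fun z => (z < 9) && (z != v)) wn,
      all (fun a => (a == v) || (a \in wn)) (iota 0 9) &
      all (fun a => all (fun b => (a == v) || (b == v) || (a == b) ||
                                  (alternate wn a b == T7n a b)) (iota 0 9)) (iota 0 9)].

Lemma goodnP (v : 'I_9) wn : goodn (val v) wn -> word_representable_on T7 [set~ v].
Proof.
case/and3P => /allP H1 /allP H2 /allP H3.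
pose w := map (@inord 8) wn.
have Ew : map val w = wn.
  rewrite /w -map_comp -[RHS]map_id; apply/eq_in_map => z zin /=.
  by rewrite inordK //; case/andP: (H1 z zin).
exists w; split.
- apply/allP => z /mapP[a ain ->]; rewrite in_setC1.
  case/andP: (H1 a ain) => ha hv; apply/eqP => E.
  move/eqP: hv; apply; have := congr1 val E; rewrite /= inordK // => ->.
- move=> x; rewrite in_setC1 => xv.
  have : val x \in wn.
    have Hx : val x \in iota 0 9 by rewrite mem_iota ltn_ord.
    have /orP[|//] := H2 (val x) Hx.
    by move/eqP/val_inj => E; rewrite E eqxx in xv.
  by rewrite -Ew mem_map //; exact: val_inj.
- move=> x y; rewrite !in_setC1 => xv yv xy.
  rewrite -(alternate_map _ _ _ val_inj) Ew.
  have Hx : val x \in iota 0 9 by rewrite mem_iota ltn_ord.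
  have Hy : val y \in iota 0 9 by rewrite mem_iota ltn_ord.
  have := allP (H3 (val x) Hx) (val y) Hy.
  have -> : (val x == val v) = false by rewrite (inj_eq val_inj) (negbTE xv).
  have -> : (val y == val v) = false by rewrite (inj_eq val_inj) (negbTE yv).
  have -> : (val x == val y) = false by rewrite (inj_eq val_inj) (negbTE xy).
  by move=> /= /eqP ->; split.
Qed.

Definition wordn (v : nat) : seq nat :=
  match v with
  | 0 => [:: 1; 3; 6; 2; 7; 4; 1; 7; 8; 3; 5; 2; 5; 4; 8; 6]
  | 1 => [:: 0; 2; 5; 3; 7; 4; 0; 7; 8; 2; 6; 3; 6; 4; 8; 5]
  | 2 => [:: 0; 1; 7; 8; 3; 4; 8; 5; 0; 5; 6; 1; 3; 6; 7; 4]
  | 3 => [:: 0; 1; 4; 7; 5; 2; 0; 5; 6; 1; 6; 8; 4; 2; 8; 7]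
  | 4 => [:: 0; 1; 3; 5; 2; 6; 7; 0; 1; 7; 5; 8; 3; 2; 0; 5; 8; 6; 1; 3; 6; 2; 7; 8]
  | 5 => [:: 0; 1; 7; 8; 3; 2; 4; 8; 0; 6; 1; 3; 6; 2; 7; 4]
  | 6 => [:: 0; 1; 4; 7; 3; 5; 2; 0; 5; 1; 8; 4; 3; 2; 8; 7]
  | 7 => [:: 0; 2; 5; 4; 6; 3; 1; 6; 0; 8; 2; 4; 3; 8; 1; 5]
  | 8 => [:: 0; 2; 5; 3; 7; 1; 4; 0; 7; 2; 6; 3; 1; 6; 4; 5]
  | _ => [::]
  end.

Lemma wordn_ok : all (fun v => goodn v (wordn v)) (iota 0 9).
Proof. vm_compute. reflexivity. Qed.

Theorem theorem15 :
  ~ word_representable T7 /\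
  (forall v : 'I_9, word_representable_on T7 [set~ v]).
Proof.
split; first exact: not_wr.
move=> v; apply: goodnP.
by apply: (allP wordn_ok); rewrite mem_iota /= ltn_ord.
Qed.
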